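(* Let $n\ge0$ and let $\mathfrak g_1,\mathfrak g_2$ be Leibniz algebras. Then $\mathfrak g_1\sim_n\mathfrak g_2$ if and only if there exist a Leibniz algebra $\mathfrak h$ with $\mathfrak h\sim_n\mathfrak g_1$ and a surjective Leibniz algebra homomorphism $\theta:\mathfrak h\to\mathfrak g_2$ such that $\operatorname{Ker}(\theta)\cap\gamma_{n+1}^{\mathsf{Lie}}(\mathfrak h)=0$.
   Context: All Leibniz algebras are over a field $\mathbb{K}$ with $\frac12\in\mathbb{K}$. A Leibniz algebra is a vector space $\mathfrak g$ with a bilinear bracket $[-,-]$ satisfying $[x,[y,z]]=[[x,y],z]-[[x,z],y]$. For $x,y\in\mathfrak g$ put $[x,y]_{lie}=[x,y]+[y,x]$. For two-sided ideals $\mathfrak m,\mathfrak n$ of $\mathfrak g$, $[\mathfrak m,\mathfrak n]_{\mathsf{Lie}}$ denotes the two-sided ideal of $\mathfrak g$ generated by $\{[m,x]_{lie}: m\in\mathfrak m, x\in\mathfrak n\}$. Lower Lie-central series: $\gamma_1^{\mathsf{Lie}}(\mathfrak g)=\mathfrak g$, $\gamma_i^{\mathsf{Lie}}(\mathfrak g)=[\gamma_{i-1}^{\mathsf{Lie}}(\mathfrak g),\mathfrak g]_{\mathsf{Lie}}$ for $i\ge2$. Upper Lie-central series: $\mathcal Z_0^{\mathsf{Lie}}(\mathfrak g)=0$, $\mathcal Z_i^{\mathsf{Lie}}(\mathfrak g)=\{x\in\mathfrak g:[x,y]_{lie}\in\mathcal Z_{i-1}^{\mathsf{Lie}}(\mathfrak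 g)\ \text{for all } y\in\mathfrak g\}$ for $i\ge1$. For $n\ge0$, Leibniz algebras $\mathfrak g_1,\mathfrak g_2$ are $n$-Lie-isoclinic, written $\mathfrak g_1\sim_n\mathfrak g_2$, if there exist Leibniz algebra isomorphisms $\eta:\mathfrak g_1/\mathcal Z_n^{\mathsf{Lie}}(\mathfrak g_1)\to\mathfrak g_2/\mathcal Z_n^{\mathsf{Lie}}(\mathfrak g_2)$ and $\xi:\gamma_{n+1}^{\mathsf{Lie}}(\mathfrak g_1)\to\gamma_{n+1}^{\mathsf{Lie}}(\mathfrak g_2)$ such that $\xi([\cdots[[x_1,x_2]_{lie},x_3]_{lie},\ldots,x_{n+1}]_{lie})=[\cdots[[y_1,y_2]_{lie},y_3]_{lie},\ldots,y_{n+1}]_{lie}$ whenever $x_i\in\mathfrak g_1$, $y_i\in\mathfrak g_2$ satisfy $\eta(x_i+\mathcal Z_n^{\mathsf{Lie}}(\mathfrak g_1))=y_i+\mathcal Z_n^{\mathsf{Lie}}(\mathfrak g_2)$ for $i=1,\ldots,n+1$. *)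

(* Defs.v *)
From HB Require Import structures.
From mathcomp Require Import all_boot all_order all_algebra.
Set Implicit Arguments. Unset Strict Implicit. Unset Printing Implicit Defensive.
Import GRing.Theory.
Local Open Scope ring_scope.

Record leibniz (K : fieldType) := Leibniz {
  lcar :> lmodType K;
  lbr : lcar -> lcar -> lcar;
  lbr_linl : forall (a : K) (x y z : lcar), lbr (a *: x + y) z = a *: lbr x z + lbr y z;
  lbr_linr : forall (a : K) (x y z : lcar), lbr z (a *: x + y) = a *: lbr z x + lbr z y;
  lbr_leibniz : forall x y z : lcar, lbr x (lbr y z) = lbr (lbr x y) z - lbr (lbr x z) y
}.

Section Leib.
Variables (K : fieldType) (g : leibniz K).

Definition liebr (x y : g) : g := lbr x y + lbr y x.

Definition is_subspace (P : g -> Prop) : Prop :=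
  P 0 /\ forall (a : K) (x y : g), P x -> P y -> P (a *: x + y).

Definition is_ideal (P : g -> Prop) : Prop :=
  is_subspace P /\ forall x y : g, P x -> P (lbr x y) /\ P (lbr y x).

Definition gen_ideal (S : g -> Prop) : g -> Prop :=
  fun x => forall I : g -> Prop, is_ideal I -> (forall y, S y -> I y) -> I x.

Definition lie_comm (M N : g -> Prop) : g -> Prop :=
  gen_ideal (fun z => exists m x, M m /\ N x /\ z = liebr m x).

(* lower Lie-central series, indexed as in the paper: gammaLie 1 = g,
   gammaLie i = [gammaLie (i-1), g]_Lie for i >= 2  (gammaLie 0 := g, unused) *)
Fixpoint gammaLie (i : nat) : g -> Prop :=
  match i with
  | 0 => fun _ => True
  | S i' => match i' with
            | 0 => fun _ => True
            | S _ => lie_comm (gammaLie i') (fun _ => True)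
            end
  end.

Fixpoint ZLie (i : nat) : g -> Prop :=
  match i with
  | 0 => fun x => x = 0
  | S i' => fun x => forall y : g, ZLie i' (liebr x y)
  end.

Fixpoint lie_iter (xs : nat -> g) (k : nat) : g :=
  match k with
  | 0 => xs 0%N
  | S k' => liebr (lie_iter xs k') (xs k)
  end.

Definition coset (P : g -> Prop) (x : g) : g -> Prop := fun y => P (y - x).
Definition quot (P : g -> Prop) : Type := {S : g -> Prop | exists x, S = coset P x}.
Definition cls (P : g -> Prop) (x : g) : quot P :=
  exist _ (coset P x) (ex_intro _ x erefl).
End Leib.

Arguments cls {K g} P x.
Arguments ZLie {K} g i _.
Arguments gammaLie {K} g i _.

Definition leib_hom (K : fieldType) (g h : leibniz K) (f : g -> h) : Prop :=
  (forall (a : K) (x y : g), f (a *: x + y) = a *: f x + f y) /\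
  (forall x y : g, f (lbr x y) = lbr (f x) (f y)).

(* A Leibniz algebra isomorphism eta : g1/P1 -> g2/P2, where the quotient
   operations are those induced on cosets by representatives. *)
Definition quot_iso (K : fieldType) (g1 g2 : leibniz K)
  (P1 : g1 -> Prop) (P2 : g2 -> Prop) (eta : quot P1 -> quot P2) : Prop :=
  bijective eta /\
  forall (a : K) (x y : g1) (u v : g2),
    eta (cls P1 x) = cls P2 u -> eta (cls P1 y) = cls P2 v ->
    eta (cls P1 (a *: x + y)) = cls P2 (a *: u + v) /\
    eta (cls P1 (lbr x y)) = cls P2 (lbr u v).

(* A Leibniz algebra isomorphism xi : A1 -> A2 between subalgebras A1, A2
   (given as predicates); xi is a function g1 -> g2 whose values off A1 are
   irrelevant. *)
Definition sub_iso (K : fieldType) (g1 g2 : leibniz K)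
  (A1 : g1 -> Prop) (A2 : g2 -> Prop) (xi : g1 -> g2) : Prop :=
  (forall x, A1 x -> A2 (xi x)) /\
  (forall x y, A1 x -> A1 y -> xi x = xi y -> x = y) /\
  (forall y, A2 y -> exists2 x, A1 x & xi x = y) /\
  (forall (a : K) x y, A1 x -> A1 y -> xi (a *: x + y) = a *: xi x + xi y) /\
  (forall x y, A1 x -> A1 y -> xi (lbr x y) = lbr (xi x) (xi y)).

Definition lie_isoclinic (K : fieldType) (n : nat) (g1 g2 : leibniz K) : Prop :=
  exists (eta : quot (ZLie g1 n) -> quot (ZLie g2 n)) (xi : g1 -> g2),
    quot_iso eta /\ sub_iso (gammaLie g1 n.+1) (gammaLie g2 n.+1) xi /\
    forall (xs : nat -> g1) (ys : nat -> g2),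
      (forall i, (i <= n)%N -> eta (cls (ZLie g1 n) (xs i)) = cls (ZLie g2 n) (ys i)) ->
      xi (lie_iter xs n) = lie_iter ys n.

(* Main.v *)
Require Import Defs.
From HB Require Import structures.
From mathcomp Require Import all_boot all_order all_algebra.
From Stdlib Require Import ClassicalEpsilon ProofIrrelevance FunctionalExtensionality PropExtensionality.
Import GRing.Theory.
Local Open Scope ring_scope.
Set Implicit Arguments. Unset Strict Implicit. Unset Printing Implicit Defensive.

Section Gen.
Variables (K : fieldType) (g : leibniz K).
Implicit Types x y z : g.

Lemma lbr0l z : lbr 0 z = 0 :> g.
Proof.
have := lbr_linl (-1) (0 : g) 0 z.
by rewrite scaler0 addr0 scaleN1r addNr.
Qed.

Lemma lbr0r z : lbr z 0 = 0 :> g.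
Proof.
have := lbr_linr (-1) (0 : g) 0 z.
by rewrite scaler0 addr0 scaleN1r addNr.
Qed.

Lemma liebr_lin (a : K) x y z : liebr (a *: x + y) z = a *: liebr x z + liebr y z.
Proof.
rewrite /liebr lbr_linl lbr_linr scalerDr.
by rewrite -!addrA; congr (_ + _); rewrite addrCA.
Qed.

Lemma liebr0l z : liebr 0 z = 0.
Proof. by rewrite /liebr lbr0l lbr0r addr0. Qed.

Section Sub.
Variable P : g -> Prop.
Hypothesis HP : is_subspace P.
Lemma sub0 : P 0. Proof. by case: HP. Qed.
Lemma subL a x y : P x -> P y -> P (a *: x + y). Proof. by case: HP => _; apply. Qed.
Lemma subD x y : P x -> P y -> P (x + y).
Proof. by move=> Hx Hy; have := subL 1 Hx Hy; rewrite scale1r. Qed.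
Lemma subN x : P x -> P (- x).
Proof. by move=> Hx; have := subL (-1) Hx sub0; rewrite addr0 scaleN1r. Qed.
Lemma subB x y : P x -> P y -> P (x - y).
Proof. by move=> Hx Hy; apply: subD Hx (subN Hy). Qed.

Lemma quot_eq (q1 q2 : quot P) : proj1_sig q1 = proj1_sig q2 -> q1 = q2.
Proof. case: q1 q2 => [S1 p1] [S2 p2] /= E; subst S2; f_equal; apply: proof_irrelevance. Qed.

Lemma cls_eqP x y : cls P x = cls P y <-> P (x - y).
Proof.
split.
- move=> E; have H : coset P x x by rewrite /coset subrr; exact: sub0.
  have : proj1_sig (cls P x) x := H. by rewrite E.
- move=> H; apply: quot_eq => /=; apply: functional_extensionality => z.
  apply: propositional_extensionality; rewrite /coset; split => Hz.
  + have -> : z - y = (z - x) + (x - y) by rewrite addrA subrK.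
    exact: subD.
  + have -> : z - x = (z - y) - (x - y) by rewrite opprB addrA subrK.
    exact: subB.
Qed.

Lemma quot_cls (q : quot P) : exists x, q = cls P x.
Proof. case: q => S [x E]; exists x; apply: quot_eq; exact: E. Qed.

End Sub.

Definition rep (P : g -> Prop) (q : quot P) : g :=
  epsilon (inhabits 0) (fun x => q = cls P x).
Lemma repP (P : g -> Prop) (q : quot P) : q = cls P (rep q).
Proof. exact: (epsilon_spec _ _ (quot_cls q)). Qed.

Lemma ZLie_sub i : is_subspace (ZLie g i).
Proof.
elim: i => [|i IH] /=.
- split => // a x y -> ->; by rewrite scaler0 addr0.
- split; first by move=> y; rewrite liebr0l; exact: (sub0 IH).
  move=> a x y Hx Hy w; rewrite liebr_lin; exact: subL.
Qed.

Definition shift (xs : nat -> g) : nat -> g :=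
  fun k => if k is k'.+1 then xs k'.+2 else liebr (xs 0%N) (xs 1%N).

Lemma lie_iter_shift xs i : lie_iter xs i.+1 = lie_iter (shift xs) i.
Proof.
elim: i => [|i IH]; first by [].
transitivity (liebr (lie_iter xs i.+1) (xs i.+2)); first by [].
by rewrite IH.
Qed.

Lemma ZLie_char i x : ZLie g i x <-> forall xs, xs 0%N = x -> lie_iter xs i = 0.
Proof.
elim: i x => [|i IH] x.
- split; first by move=> Hx xs /= ->.
  by move=> H; apply: (H (fun _ => x)).
- split.
  + move=> H xs Hx; rewrite lie_iter_shift.
    apply: ((IH (liebr x (xs 1%N))).1 (H (xs 1%N))).
    by rewrite /= Hx.
  + move=> H y; apply/IH => ys Hys.
    pose xs := fun k => match k with 0 => x | 1 => y | k'.+2 => ys k'.+1 end.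
    have := H xs erefl; rewrite lie_iter_shift.
    have -> : shift xs = ys; last by [].
    by apply: functional_extensionality => -[|k] //=; rewrite Hys.
Qed.

Lemma gen_ideal_ideal (S : g -> Prop) : is_ideal (gen_ideal S).
Proof.
split; [split|].
- by move=> I [[H0 _] _] _.
- move=> a x y Hx Hy I HI HS. exact: (subL HI.1 a (Hx I HI HS) (Hy I HI HS)).
- move=> x y Hx; split=> I HI HS.
  + exact: (HI.2 _ y (Hx I HI HS)).1.
  + exact: (HI.2 _ y (Hx I HI HS)).2.
Qed.

Lemma gamma_ideal i : is_ideal (gammaLie g i).
Proof.
case: i => [|[|i]] /=; try by repeat split.
exact: gen_ideal_ideal.
Qed.

Lemma iter_gamma xs i : gammaLie g i.+1 (lie_iter xs i).
Proof.
elim: i => [|i IH] //.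
move=> I HI HS; apply: HS; exists (lie_iter xs i), (xs i.+1). by [].
Qed.

End Gen.

Section Hom.
Variables (K : fieldType) (h g2 : leibniz K) (th : h -> g2).
Hypothesis Hth : leib_hom th.

Lemma homL a (x y : h) : th (a *: x + y) = a *: th x + th y. Proof. exact: Hth.1. Qed.
Lemma homBr (x y : h) : th (lbr x y) = lbr (th x) (th y). Proof. exact: Hth.2. Qed.
Lemma hom0 : th 0 = 0.
Proof. by have := homL (-1) 0 0; rewrite scaler0 addr0 scaleN1r addNr. Qed.
Lemma homD (x y : h) : th (x + y) = th x + th y.
Proof. by have := homL 1 x y; rewrite !scale1r. Qed.
Lemma homB (x y : h) : th (x - y) = th x - th y.
Proof. by have := homL (-1) y x; rewrite !scaleN1r !(addrC (- _)). Qed.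
Lemma homLie (x y : h) : th (liebr x y) = liebr (th x) (th y).
Proof. by rewrite /liebr homD !homBr. Qed.
Lemma hom_iter xs i : th (lie_iter xs i) = lie_iter (fun k => th (xs k)) i.
Proof. elim: i => [|i IH] //=. by rewrite homLie IH. Qed.

Lemma hom_gamma i x : gammaLie h i.+1 x -> gammaLie g2 i.+1 (th x).
Proof.
elim: i x => [|i IH] x //.
move=> Hx I HI HS. refine (Hx (fun z => I (th z)) _ _).
- split; [split|].
  + rewrite hom0; exact: (sub0 HI.1).
  + move=> a u v Hu Hv; rewrite homL; exact: (subL HI.1).
  + move=> u v Hu; rewrite !homBr; exact: (HI.2 _ _ Hu).
- move=> z [m [y [Hm [_ ->]]]]; rewrite homLie; apply: HS.
  exists (th m), (th y); split; [exact: IH | by []].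
Qed.

Hypothesis Hs : forall y, exists x, th x = y.

Lemma gamma_surj i y : gammaLie g2 i.+1 y -> exists2 x, gammaLie h i.+1 x & th x = y.
Proof.
elim: i y => [|i IH] y.
- by move=> _; case: (Hs y) => x <-; exists x.
- move=> Hy; refine (Hy (fun y => exists2 x, gammaLie h i.+2 x & th x = y) _ _).
  + split; [split|].
    * exists 0; [exact: (sub0 (gamma_ideal h i.+2).1) | exact: hom0].
    * move=> a _ _ [u Hu <-] [v Hv <-]; exists (a *: u + v);
        [exact: (subL (gamma_ideal h i.+2).1) | exact: homL].
    * move=> _ w [u Hu <-]; case: (Hs w) => v <-.
      have [H1 H2] := (gamma_ideal h i.+2).2 u v Hu.
      split; [exists (lbr u v) | exists (lbr v u)] => //; exact: homBr.
  + move=> _ [m [w [Hm [_ ->]]]].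
    case: (IH m Hm) => m' Hm' <-. case: (Hs w) => w' <-.
    exists (liebr m' w'); last exact: homLie.
    move=> I HI HS; apply: HS; exists m', w'. by [].
Qed.

Lemma ZLie_fwd i z : ZLie h i z -> ZLie g2 i (th z).
Proof.
elim: i z => [|i IH] z /=; first by move=> ->; exact: hom0.
move=> H y; case: (Hs y) => w <-; rewrite -homLie; exact: IH.
Qed.

End Hom.

Lemma ZLie_back (K : fieldType) (h g2 : leibniz K) (th : h -> g2) (Hth : leib_hom th)
  (n : nat) (Hk : forall x, th x = 0 -> gammaLie h n.+1 x -> x = 0) (z : h) :
  ZLie g2 n (th z) -> ZLie h n z.
Proof.
move=> /ZLie_char H; apply/ZLie_char => xs Hx.
apply: Hk; last exact: iter_gamma.
rewrite (hom_iter Hth); apply: H; by rewrite /= Hx.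
Qed.

Lemma inj_surj_bij (A B : Type) (a0 : A) (f : A -> B) :
  injective f -> (forall y, exists x, f x = y) -> bijective f.
Proof.
move=> Hi Hs. pose gi y := epsilon (inhabits a0) (fun x => f x = y).
have Hg y : f (gi y) = y := epsilon_spec _ _ (Hs y).
by exists gi => [x|y]; [apply: Hi; exact: Hg | exact: Hg].
Qed.

Section Iso.
Variables (K : fieldType) (n : nat).

Lemma iso_sym (g1 g2 : leibniz K) : lie_isoclinic n g1 g2 -> lie_isoclinic n g2 g1.
Proof.
case=> eta [xi [[Hb He] [[Xin [Xinj [Xsurj [Xlin Xbr]]]] Hc]]].
case: Hb => etai eK eiK.
pose xii y := epsilon (inhabits (0:g1)) (fun x => gammaLie g1 n.+1 x /\ xi x = y).
have Hxii y : gammaLie g2 n.+1 y -> gammaLie g1 n.+1 (xii y) /\ xi (xii y) = y.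
  move=> Hy; have Ex : exists x, gammaLie g1 n.+1 x /\ xi x = y.
    by case: (Xsurj y Hy) => x Hx <-; exists x.
  exact: (epsilon_spec (inhabits (0:g1)) _ Ex).
exists etai, xii; split; [|split].
- split; first by exists eta.
  move=> a x y u v Hx Hy.
  have Hx' : eta (cls _ u) = cls _ x by rewrite -Hx eiK.
  have Hy' : eta (cls _ v) = cls _ y by rewrite -Hy eiK.
  case: (He a u v x y Hx' Hy') => E1 E2; split; [by rewrite -E1 eK | by rewrite -E2 eK].
- split; [|split; [|split; [|split]]].
  + move=> y Hy; exact: (Hxii y Hy).1.
  + move=> y1 y2 H1 H2 E; by rewrite -(Hxii _ H1).2 -(Hxii _ H2).2 E.
  + move=> x Hx. exists (xi x); first exact: Xin.
    apply: Xinj; [exact: (Hxii _ (Xin _ Hx)).1 | exact: Hx | exact: (Hxii _ (Xin _ Hx)).2].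
  + move=> a y1 y2 H1 H2.
    have H12 := subL (gamma_ideal g2 n.+1).1 a H1 H2.
    apply: Xinj; first exact: (Hxii _ H12).1.
      exact: (subL (gamma_ideal g1 n.+1).1 a (Hxii _ H1).1 (Hxii _ H2).1).
    rewrite (Xlin a _ _ (Hxii _ H1).1 (Hxii _ H2).1) (Hxii _ H1).2 (Hxii _ H2).2.
    exact: (Hxii _ H12).2.
  + move=> y1 y2 H1 H2.
    have H12 := ((gamma_ideal g2 n.+1).2 y1 y2 H1).1.
    apply: Xinj; first exact: (Hxii _ H12).1.
      exact: (((gamma_ideal g1 n.+1).2 _ _ (Hxii _ H1).1).1).
    rewrite (Xbr _ _ (Hxii _ H1).1 (Hxii _ H2).1) (Hxii _ H1).2 (Hxii _ H2).2.
    exact: (Hxii _ H12).2.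
- move=> ys xs H.
  have H' : forall i, (i <= n)%N -> eta (cls _ (xs i)) = cls _ (ys i).
    by move=> i Hi; rewrite -H // eiK.
  have E := Hc xs ys H'.
  apply: Xinj; [exact: (Hxii _ (iter_gamma ys n)).1 | exact: iter_gamma |].
  by rewrite (Hxii _ (iter_gamma _ _)).2 E.
Qed.

Lemma iso_comp (g1 h g2 : leibniz K) (th : h -> g2) :
  leib_hom th -> (forall y, exists x, th x = y) ->
  (forall x, th x = 0 -> gammaLie h n.+1 x -> x = 0) ->
  lie_isoclinic n g1 h -> lie_isoclinic n g1 g2.
Proof.
move=> Hth Hs Hk [eta1 [xi1 [[Hb He] [[Xin [Xinj [Xsurj [Xlin Xbr]]]] Hc]]]].
pose etat (q : quot (ZLie h n)) : quot (ZLie g2 n) := cls (ZLie g2 n) (th (rep q)).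
have etat_cls z : etat (cls (ZLie h n) z) = cls (ZLie g2 n) (th z).
  rewrite /etat; apply/(cls_eqP (ZLie_sub g2 n)).
  rewrite -(homB Hth); apply: (ZLie_fwd Hth Hs).
  apply/(cls_eqP (ZLie_sub h n)). by rewrite -repP.
have etat_inj : injective etat.
  move=> q1 q2; rewrite (repP q1) (repP q2) !etat_cls => /(cls_eqP (ZLie_sub _ _)) E.
  apply/(cls_eqP (ZLie_sub _ _)); apply: (ZLie_back Hth Hk).
  by rewrite (homB Hth).
have etat_surj : forall q, exists q', etat q' = q.
  move=> q; case: (quot_cls q) => y ->; case: (Hs y) => x <-.
  by exists (cls _ x); exact: etat_cls.
exists (fun q => etat (eta1 q)), (fun x => th (xi1 x)).
split; [|split].
- split; first exact: (bij_comp (inj_surj_bij (cls _ 0) etat_inj etat_surj) Hb).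
  move=> a x y u v Hu Hv.
  case: (Hs u) => w Hw; case: (Hs v) => w' Hw'.
  have E1 : eta1 (cls _ x) = cls _ w by apply: etat_inj; rewrite Hu etat_cls Hw.
  have E2 : eta1 (cls _ y) = cls _ w' by apply: etat_inj; rewrite Hv etat_cls Hw'.
  case: (He a x y w w' E1 E2) => F1 F2.
  by rewrite F1 F2 !etat_cls (homL Hth) (homBr Hth) Hw Hw'.
- split; [|split; [|split; [|split]]].
  + move=> x Hx; exact: (hom_gamma Hth (Xin _ Hx)).
  + move=> x y Hx Hy E. apply: Xinj => //.
    apply/eqP; rewrite -subr_eq0; apply/eqP; apply: Hk.
      by rewrite (homB Hth) E subrr.
    exact: (subB (gamma_ideal h n.+1).1 (Xin _ Hx) (Xin _ Hy)).
  + move=> y Hy. case: (gamma_surj Hth Hs Hy) => z Hz <-.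
    case: (Xsurj z Hz) => x Hx <-. by exists x.
  + by move=> a x y Hx Hy; rewrite Xlin // (homL Hth).
  + by move=> x y Hx Hy; rewrite Xbr // (homBr Hth).
- move=> xs ys H.
  pose zs i := epsilon (inhabits (0 : h)) (fun z => th z = ys i).
  have Hz i : th (zs i) = ys i := epsilon_spec _ _ (Hs (ys i)).
  have E : forall i, (i <= n)%N -> eta1 (cls _ (xs i)) = cls _ (zs i).
    by move=> i Hi; apply: etat_inj; rewrite H // etat_cls Hz.
  rewrite (Hc xs zs E) (hom_iter Hth). congr (lie_iter _ n).
  apply: functional_extensionality => i; exact: Hz.
Qed.

End Iso.

Theorem mainTheorem9 (K : fieldType) (h2 : (2 : K) != 0) (n : nat)
  (g1 g2 : leibniz K) :
  lie_isoclinic n g1 g2 <->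
  exists (h : leibniz K) (theta : h -> g2),
    lie_isoclinic n h g1 /\ leib_hom theta /\
    (forall y : g2, exists x : h, theta x = y) /\
    (forall x : h, theta x = 0 -> gammaLie h n.+1 x -> x = 0).
Proof.
split.
- move=> H; exists g2, id; split; first exact: iso_sym H.
  split; first by split.
  by split => [y|x]; [exists y | ].
- case=> h [th [Hiso [Hth [Hs Hk]]]].
  exact: (iso_comp Hth Hs Hk (iso_sym Hiso)).
Qed.
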